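(* Let $p$ be a prime, $q$ a power of $p$, and $F$ a field of characteristic $p$ containing $\mathbb{F}_q$. Let $L\in F[x]$ be a monic $q$-polynomial of $q$-degree $n\ge1$ whose coefficient of $x$ equals $(-1)^n$, let $E$ be its splitting field over $F$, and let $G=\mathrm{Gal}(E/F)$, regarded as a subgroup of $GL(n,q)$ via its linear action on the $\mathbb{F}_q$-space of roots of $L$. Then $\det\sigma=1$ for all $\sigma\in G$; thus $G$ is a subgroup of $SL(n,q)$.
   Context: A $q$-polynomial over $F$ is a polynomial $\sum_{i=0}^n a_i x^{q^i}\in F[x]$; with $a_n\ne0$ its $q$-degree is $n$. When the coefficient of $x$ is nonzero, the roots of $L$ in $E$ are distinct and form an $n$-dimensional $\mathbb{F}_q$-vector space on which $G$ acts $\mathbb{F}_q$-linearly. *)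

(* Defs.v *)
From HB Require Import structures.
From mathcomp Require Import all_boot all_order all_algebra all_fingroup all_field.
Set Implicit Arguments. Unset Strict Implicit. Unset Printing Implicit Defensive.
Import GRing.Theory.
Local Open Scope ring_scope.

Definition is_qpoly (F : fieldType) (q : nat) (L : {poly F}) : Prop :=
  forall j : nat, L`_j != 0 -> exists i : nat, j = (q ^ i)%N.

Definition qdeg_is (F : fieldType) (q n : nat) (L : {poly F}) : Prop :=
  size L = (q ^ n).+1.

(* Main.v *)
Require Import Defs.
From HB Require Import structures.
From mathcomp Require Import all_boot all_order all_algebra all_fingroup all_field.
Import GRing.Theory.
Local Open Scope ring_scope.

Section Frob.
Variables (R : comNzRingType) (p m : nat) (ch : p \in [pchar R]).
Definition frobq of p \in [pchar R] := fun x : R => x ^+ (p ^ m)%N.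
Local Notation fq := (frobq ch).
Lemma frobq_nat : ([pchar R]).-nat (p ^ m)%N.
Proof. by rewrite (eq_pnat _ (pcharf_eq ch)) pnatX pnat_id ?(pcharf_prime ch). Qed.
Lemma frobqD x y : fq (x + y) = fq x + fq y.
Proof. exact: exprDn_pchar frobq_nat. Qed.
Lemma frobq_is_nmod_morphism : nmod_morphism fq.
Proof. by split=> [|x y]; [rewrite /frobq expr0n expn_eq0 eqn0Ngt (prime_gt0 (pcharf_prime ch)) | exact: frobqD]. Qed.
Lemma frobq_is_monoid_morphism : monoid_morphism fq.
Proof. by split=> [|x y]; [rewrite /frobq expr1n | rewrite /frobq exprMn]. Qed.
HB.instance Definition _ := GRing.isNmodMorphism.Build R R fq frobq_is_nmod_morphism.
HB.instance Definition _ := GRing.isMonoidMorphism.Build R R fq frobq_is_monoid_morphism.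
End Frob.


Theorem corollary2p4
  (p k : nat) (F : fieldType) (K : finFieldType) (iota : {rmorphism K -> F})
  (E : splittingFieldType F) (L : {poly F}) (n : nat) :
  prime p -> p \in [pchar F] -> (0 < k)%N ->
  #|K| = (p ^ k)%N ->
  is_qpoly (p ^ k) L -> qdeg_is (p ^ k) n L -> L \is monic -> (1 <= n)%N ->
  L`_1 = (-1) ^+ n ->
  splittingFieldFor 1%VS (map_poly (in_alg E) L) fullv ->
  forall b : 'I_n -> E,
    (forall i, root (map_poly (in_alg E) L) (b i)) ->
    (forall c : 'I_n -> K,
        \sum_i (iota (c i))%:A * b i = 0 -> forall i, c i = 0) ->
    (forall x : E, root (map_poly (in_alg E) L) x ->
        exists c : 'I_n -> K, x = \sum_i (iota (c i))%:A * b i) ->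
  forall sigma, sigma \in ('Gal(fullv / 1%VS))%g ->
  forall M : 'M[K]_n,
    (forall j, sigma (b j) = \sum_i (iota (M i j))%:A * b i) ->
    \det M = 1.
Proof.
case: n => [|n]; first by move=> _ _ _ _ _ _ _ h; rewrite ltnn in h.
move=> pr_p chF k_gt0 cardK qpL qdegL monL n_ge1 L1 _ b rootb indep _ sigma sigG M sigM.
set q := (p ^ k)%N in qpL qdegL cardK.
have chE : p \in [pchar E] by rewrite pchar_lalg.
have q_gt1 : (1 < q)%N by rewrite /q -{1}(expn0 p) ltn_exp2l ?prime_gt1.
have q_gt0 : (0 < q)%N by apply: ltnW.
have fqD j (x y : E) : (x + y) ^+ (q ^ j) = x ^+ (q ^ j) + y ^+ (q ^ j).
  by rewrite /q -expnM; exact: (@frobqD E p (k * j)%N chE).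
have fqsum j (I : finType) (G : I -> E) :
    (\sum_i G i) ^+ (q ^ j) = \sum_i (G i) ^+ (q ^ j).
  apply: (big_morph (fun x : E => x ^+ (q ^ j)) (fqD j)).
  by rewrite expr0n expn_eq0 eqn0Ngt q_gt0.
pose f : {rmorphism K -> E} := (in_alg E \o iota).
have fE c : f c = (iota c)%:A by [].
have cK (c : K) : c ^+ q = c by rewrite -cardK expf_card.
have fK c j : (iota c)%:A ^+ (q ^ j) = (iota c)%:A :> E.
  rewrite -!fE -rmorphXn; congr (f _).
  by elim: j => [|j IH]; rewrite ?expn0 ?expr1 // expnS mulnC exprM IH cK.
pose phi (c : 'I_n.+1 -> K) := \sum_i (iota (c i))%:A * b i.
have phi_pow c j : (phi c) ^+ (q ^ j) = \sum_i (iota (c i))%:A * b i ^+ (q ^ j).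
  by rewrite fqsum; apply: eq_bigr => i _; rewrite exprMn fK.
pose l (i : nat) : E := (L`_(q ^ i))%:A.
have Lsum : L = \sum_(i < n.+2) L`_(q ^ i) *: 'X^(q ^ i).
  apply/polyP => j; rewrite coef_sum.
  under eq_bigr do rewrite coefZ coefXn.
  have [Lj0|Ljn0] := eqVneq L`_j 0.
    rewrite Lj0 big1 // => i _; case: eqP => [<-|]; rewrite ?mulr0 //.
    by rewrite Lj0 mul0r.
  have [i0 ji0] := qpL j Ljn0.
  have hi0 : (i0 < n.+2)%N.
    have : (j < size L)%N by rewrite ltnNge; apply: contra Ljn0 => /leq_sizeP ->.
    by rewrite qdegL ji0 ltnS leq_exp2l.
  rewrite (bigD1 (Ordinal hi0)) //= big1 ?addr0 -?ji0 ?eqxx ?mulr1 // => i ii0.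
  rewrite ji0 eqn_exp2l //; case: eqP => [h|]; last by rewrite mulr0.
  by case/eqP: ii0; apply: val_inj.
have Lroot x : root (map_poly (in_alg E) L) x ->
    \sum_(i < n.+2) l i * x ^+ (q ^ i) = 0.
  move/eqP; rewrite {1}Lsum rmorph_sum horner_sum => H; rewrite -[X in _ = X]H.
  by apply: eq_bigr => i _; rewrite /= map_polyZ map_polyXn hornerZ hornerXn.
have l0 : l 0%N = (-1) ^+ n.+1 by rewrite /l expn0 L1 -(rmorph_sign (in_alg E)).
have ln : l n.+1 = 1.
  have := monicP monL; rewrite /lead_coef qdegL /= => h.
  by rewrite /l h scale1r.
pose B := \matrix_(i < n.+1, j < n.+1) b i ^+ (q ^ j).
have dB0 : \det B != 0.
  apply/negP => /eqP dB.
  have /det0P [v v0 vB] : \det B^T == 0 by rewrite det_tr dB.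
  pose A : {poly E} := \sum_(j < n.+1) v 0 j *: 'X^(q ^ j).
  have [j0 vj0] : exists j0, v 0 j0 != 0.
    apply/existsP; move: v0; apply: contraNT => /existsPn H.
    by apply/eqP/rowP => j; rewrite mxE; apply/eqP/negbNE/H.
  have A0 : A != 0.
    apply/eqP => /(congr1 (fun r : {poly E} => r`_(q ^ j0))).
    rewrite coef0 coef_sum (bigD1 j0) //= big1 ?addr0 => [|j jj0].
      by rewrite coefZ coefXn eqxx mulr1; apply/eqP.
    rewrite coefZ coefXn eqn_exp2l // eq_sym.
    by move: jj0; rewrite -(inj_eq val_inj) => /negbTE ->; rewrite mulr0.
  have Aroot (c : {ffun 'I_n.+1 -> K}) : root A (phi c).
    rewrite /root /A horner_sum.
    under eq_bigr do rewrite hornerZ hornerXn phi_pow mulr_sumr.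
    rewrite exchange_big /= big1 // => i _.
    under eq_bigr do rewrite mulrCA.
    rewrite -mulr_sumr.
    have := congr1 (fun m : 'M[E]_(1, n.+1) => m 0 i) vB; rewrite !mxE => h.
    have e : \sum_j v 0 j * b i ^+ (q ^ j) = 0.
      by apply: etrans h; apply: eq_bigr => j _; rewrite !mxE.
    by rewrite e mulr0.
  pose pphi := fun c : {ffun 'I_n.+1 -> K} => phi c.
  have phi_inj : injective pphi.
    move=> c c' /eqP; rewrite -subr_eq0 /pphi /phi -sumrB => /eqP H.
    apply/ffunP => i; apply/eqP; rewrite -subr_eq0; apply/eqP.
    apply: (indep (fun i => c i - c' i)) ; rewrite -[RHS]H.
    by apply: eq_bigr => j _; rewrite rmorphB scalerBl mulrBl.
  have := max_poly_roots A0 (rs := (map pphi (enum {ffun 'I_n.+1 -> K}))).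
  rewrite map_inj_uniq ?enum_uniq // size_map -cardE card_ffun card_ord cardK.
  have -> : all (root A) (map pphi (enum {ffun 'I_n.+1 -> K})).
    by apply/allP => x /mapP [c _ ->]; apply: Aroot.
  move=> /(_ isT isT) => hs.
  have : (size A <= (q ^ n).+1)%N.
    apply: leq_trans (size_sum _ _ _) _; apply/bigmax_leqP => j _.
    apply: leq_trans (size_scale_leq _ _) _.
    by rewrite size_polyXn ltnS leq_exp2l // -ltnS.
  move=> /(leq_trans hs); rewrite ltnS expnS.
  by rewrite leqNgt (ltn_Pmull q_gt1) // expn_gt0 q_gt0.
pose D := \matrix_(i < n.+1, j < n.+1)
  if j == ord0 then b i ^+ (q ^ n.+1) else B i j.
pose T := \matrix_(i < n.+1, j < n.+1) if j == ord0 then - l i else (i == j)%:R.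
have DBT : D = B *m T.
  apply/matrixP => i j; rewrite !mxE; case: ifP => j0.
    have := Lroot _ (rootb i); rewrite big_ord_recr /= ln mul1r => /eqP.
    rewrite addrC addr_eq0 => /eqP ->; rewrite -sumrN; apply: eq_bigr => m _.
    by rewrite !mxE j0 mulrN mulrC.
  rewrite (bigD1 j) //= !mxE j0 eqxx mulr1 big1 ?addr0 // => m mj.
  by rewrite !mxE j0 (negbTE mj) mulr0.
have detT : \det T = - l 0%N.
  rewrite det_trig; last first.
    apply/is_trig_mxP => i j ij; rewrite mxE.
    have -> : (j == ord0) = false by apply/negbTE; rewrite -(inj_eq val_inj) /= -lt0n (leq_ltn_trans _ ij).
    by rewrite -val_eqE /= ltn_eqF.
  rewrite big_ord_recl big1 ?mulr1; first by rewrite mxE eqxx.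
  by move=> i _; rewrite mxE eqxx /=.
have detD : \det D = (-1) ^+ n * \det B.
  by rewrite DBT det_mulmx detT l0 exprS mulN1r opprK mulrC.
pose C := map_mx (@frobq E p k chE) B.
have detC : \det C = \det B ^+ q by rewrite det_map_mx.
have detCD : \det C = (-1) ^+ n * \det D.
  rewrite (expand_det_col _ ord_max) (expand_det_col D ord0) mulr_sumr.
  apply: eq_bigr => i _.
  have colCD : col' ord_max C = col' ord0 D.
    apply/matrixP => i' j; rewrite !mxE lift_max lift0 /=.
    by rewrite /frobq -/q -exprM -expnSr.
  rewrite /cofactor colCD !mxE /= /frobq -/q -exprM -expnSr addn0 exprD.
  by rewrite [_ * (-1) ^+ n]mulrC -!mulrA !(mulrCA ((-1) ^+ n)).
have sq : (-1) ^+ n * (-1) ^+ n = 1 :> E by rewrite -exprMn mulrNN mulr1 expr1n.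
have DeltaK : \det B ^+ q = \det B.
  by rewrite -detC detCD detD mulrA sq mul1r.
have [c0 Dc0] : exists c, \det B = (iota c)%:A.
  suff : [exists c, \det B == (iota c)%:A] by case/existsP => c /eqP; exists c.
  apply: contraT => /existsPn Hn.
  pose P : {poly E} := 'X^q - 'X.
  have sP : size P = q.+1.
    by rewrite /P size_addl size_polyXn // size_opp size_polyX ltnS.
  have P0 : P != 0 by rewrite -size_poly_eq0 sP.
  have rP x : x ^+ q = x -> root P x.
    by move=> h; rewrite /root /P !hornerE h subrr.
  pose rs := \det B :: map (fun c => (iota c)%:A) (enum K).
  have hall : all (root P) rs.
    rewrite /= rP //=; apply/allP => x /mapP [c _ ->]; apply: rP.
    by have := fK c 1%N; rewrite expn1.
  have huniq : uniq rs.
    rewrite /= map_inj_uniq ?enum_uniq ?andbT; last first.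
      by move=> c c' h; apply: (fmorph_inj f); rewrite !fE.
    by apply/mapP => [[c _ h]]; move: (Hn c); rewrite h eqxx.
  have := max_poly_roots P0 hall huniq.
  by rewrite /= size_map -cardE cardK sP ltnn.
have sigD : sigma (\det B) = \det B.
  apply: (fixed_gal (K := 1%VS) _ sigG); first exact: sub1v.
  by rewrite Dc0 memvZ // mem1v.
have sigB : map_mx sigma B = (map_mx f M)^T *m B.
  apply/matrixP => i j; rewrite !mxE rmorphXn /= sigM fqsum.
  apply: eq_bigr => m _; rewrite !mxE exprMn fK //.
have : f (\det M) * \det B = \det B.
  have := congr1 determinant sigB; rewrite det_mulmx det_tr !det_map_mx /= sigD => h.
  exact: esym h.
rewrite -{2}[\det B]mul1r => /(mulIf dB0).
by rewrite -(rmorph1 f) => /(fmorph_inj f).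
Qed.
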